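(* For any connected graphs $G$ and $H$, $$\mu_t(G\,\Box\,H)\le \min\{(n(G)-|\mathcal{P}(G)|)\,\mu_t(H),\ (n(H)-|\mathcal{P}(H)|)\,\mu_t(G)\}.$$
   Context: All graphs are finite, simple and undirected; $n(G)$ denotes the order of $G$ and $N_G[v]$ the closed neighborhood of $v$. The Cartesian product $G\,\Box\,H$ has vertex set $V(G)\times V(H)$, with $(x,y)$ adjacent to $(x',y')$ iff either $x=x'$ and $yy'\in E(H)$, or $xx'\in E(G)$ and $y=y'$. Let $F$ be a connected graph and $X\subseteq V(F)$. Two vertices $x,y\in V(F)$ are $X$-visible if there exists a shortest $x,y$-path in $F$ none of whose internal vertices belongs to $X$. $X$ is a total mutual-visibility set of $F$ if every two vertices of $F$ are $X$-visible (the empty set is allowed). $\mu_t(F)$ is the maximum cardinality of a total mutual-visibility set of $F$. $\mathcal{P}(F)$ is the set of vertices $v$ of $F$ for which there exist two distinct vertices $u,w\in V(F)$ with $N_F[u]\cap N_F[w]=\{v\}$. *)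

(* Defs.v *)
From mathcomp Require Import all_boot.
From Stdlib Require Import ClassicalEpsilon.
Set Implicit Arguments. Unset Strict Implicit. Unset Printing Implicit Defensive.

Section Graphs.
Variable T : finType.
Variable e : rel T.

Definition simple_graph : Prop := symmetric e /\ irreflexive e.

Definition connected_graph : Prop := forall x y : T, connect e x y.

(* A walk x :: p from x to y; its length is size p. *)
Definition is_walk (x y : T) (p : seq T) : bool := path e x p && (last x p == y).

Definition is_shortest (x y : T) (p : seq T) : Prop :=
  is_walk x y p /\ forall q, is_walk x y q -> size p <= size q.

Definition internal (x : T) (p : seq T) : seq T := behead (belast x p).

Definition X_visible (X : {set T}) (x y : T) : Prop :=
  exists p, is_shortest x y p /\ all (fun v => v \notin X) (internal x p).

Definition total_mv_set (X : {set T}) : Prop := forall x y : T, X_visible X x y.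

Definition total_mv_setb (X : {set T}) : bool :=
  if excluded_middle_informative (total_mv_set X) then true else false.

Definition mu_t : nat := \max_(X : {set T} | total_mv_setb X) #|X|.

Definition cnbhd (v : T) : {set T} := [set x | (x == v) || e v x].

Definition Pset : {set T} :=
  [set v | [exists u, exists w, (u != w) && (cnbhd u :&: cnbhd w == [set v])]].

End Graphs.

Definition box_rel (T1 T2 : finType) (e1 : rel T1) (e2 : rel T2) : rel (T1 * T2) :=
  fun x y => ((x.1 == y.1) && e2 x.2 y.2) || (e1 x.1 y.1 && (x.2 == y.2)).

(* Main.v *)
Require Import Defs.
From mathcomp Require Import all_boot.
From Stdlib Require Import ClassicalEpsilon.
Set Implicit Arguments. Unset Strict Implicit. Unset Printing Implicit Defensive.

Section Iso.
Variables (T T' : finType) (e : rel T) (e' : rel T') (f : T -> T') (g : T' -> T).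
Hypotheses (fK : cancel f g) (gK : cancel g f) (hf : forall x y, e' (f x) (f y) = e x y).

Lemma iso_mv X : total_mv_set e X -> total_mv_set e' (f @: X).
Proof.
move=> HX x' y'.
case: (HX (g x') (g y')) => p [[/andP [Hp /eqP Hl] Hmin] Hint].
exists (map f p); split; [split|].
- apply/andP; split.
    by rewrite -{1}(gK x') path_map (eq_path (e' := e)) // => a b /=; rewrite hf.
  by rewrite -{1}(gK x') last_map Hl gK.
- move=> q /andP [Hq /eqP Hql]; rewrite size_map.
  have := Hmin (map g q); rewrite size_map; apply; apply/andP; split.
    by rewrite path_map (eq_path (e' := e')) // => a b /=; rewrite -hf !gK.
  by rewrite last_map Hql.
- rewrite /internal -{1}(gK x') belast_map behead_map all_map.
  apply/allP => v Hv /=; rewrite mem_imset; last exact: can_inj fK.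
  by move/allP: Hint => /(_ v Hv).
Qed.
End Iso.

Section Fiber.
Variables (T1 T2 : finType) (e1 : rel T1) (e2 : rel T2).
Hypothesis irr1 : irreflexive e1.

Lemma proj_walk (x : T1 * T2) p : path (box_rel e1 e2) x p ->
  exists q, [/\ path e2 x.2 q, last x.2 q = (last x p).2, size q <= size p &
     (size q = size p -> all (fun z => z.1 == x.1) p)].
Proof.
elim: p x => [|z p IH] x /=; first by move=> _; exists [::].
case/andP => Hxz /IH [q [Hq Hl Hs Heq]].
case/orP: Hxz => /andP [Ha Hb].
- exists (z.2 :: q); split => //=; first by rewrite Hb.
  move=> [] /Heq; rewrite (eqP Ha) => ->; by rewrite eqxx.
- exists q; rewrite (eqP Hb); split => //.
  + by apply: leqW.
  + by move=> E; move: Hs; rewrite E ltnn.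
Qed.

Lemma lift_walk (a : T1) h r : path e2 h r ->
  path (box_rel e1 e2) (a, h) (map (pair a) r).
Proof.
elim: r h => [|z r IH] h //= /andP [H1 H2].
by rewrite /box_rel /= eqxx H1 /= IH.
Qed.

Lemma snd_walk (x : T1 * T2) p : path (box_rel e1 e2) x p ->
  all (fun z => z.1 == x.1) p -> path e2 x.2 (map snd p).
Proof.
elim: p x => [|z p IH] x //= /andP [Hxz Hp] /andP [/eqP Hz Hall].
rewrite (IH z Hp) ?andbT.
  case/orP: Hxz => /andP [H1 H2] //.
  by rewrite Hz irr1 in H1.
by apply/allP => y Hy; rewrite Hz; apply: (allP Hall).
Qed.

Lemma fiber_mv X a : total_mv_set (box_rel e1 e2) X ->
  total_mv_set e2 [set h | (a, h) \in X].
Proof.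
move=> HX h1 h2.
case: (HX (a, h1) (a, h2)) => p [[Hw Hmin] Hint].
move: (Hw) => /andP [Hp /eqP Hl].
have [q [Hq Hql Hs Heq]] := proj_walk Hp.
have Hle : forall r, is_walk e2 h1 h2 r -> size p <= size r.
  move=> r /andP [Hr /eqP Hrl]; rewrite -(size_map (pair a) r); apply: Hmin.
  by rewrite /is_walk lift_walk //= -Hrl (last_map (pair a)).
have Hall : all (fun z => z.1 == a) p.
  apply: Heq; apply/eqP; rewrite eqn_leq Hs Hle // /is_walk Hq Hql Hl //=.
have Hsp := snd_walk Hp Hall.
exists (map snd p); split; [split|].
- by rewrite /is_walk Hsp /= -[h1]/((a,h1).2) last_map Hl.
- by move=> r Hr; rewrite size_map; apply: Hle.
- rewrite /internal -[h1]/((a,h1).2) belast_map behead_map all_map.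
  apply/allP => z Hz /=; rewrite inE.
  have Hz1 : z.1 == a.
    move: (mem_belast (mem_behead Hz)); rewrite inE => /orP [/eqP -> //|].
    by move/(allP Hall).
  by rewrite -(eqP Hz1) -surjective_pairing; apply: (allP Hint).
Qed.
End Fiber.

Section PBound.
Variables (T1 T2 : finType) (e1 : rel T1) (e2 : rel T2).
Hypothesis sym1 : symmetric e1.

Lemma P_notin X a h : total_mv_set (box_rel e1 e2) X -> a \in Pset e1 ->
  (a, h) \notin X.
Proof.
move=> HX; rewrite inE => /existsP [u] /existsP [w] /andP [uw /eqP E].
have inter : forall x, (x \in cnbhd e1 u) && (x \in cnbhd e1 w) = (x == a).
  by move=> x; rewrite -in_setI E in_set1.
have nuw : ~~ e1 u w.
  apply/negP => Huw.
  have /eqP wa : w == a by rewrite -inter !inE eqxx Huw orbT.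
  have /eqP ua : u == a by rewrite -inter !inE eqxx sym1 Huw orbT.
  by rewrite ua wa eqxx in uw.
have Hua : e1 u a.
  have := inter a; rewrite eqxx !inE => /andP [/orP [/eqP au|//] /orP [/eqP aw|Hwa]].
    by rewrite -au aw eqxx in uw.
  by rewrite -au sym1 Hwa in nuw.
have Haw : e1 a w.
  have := inter a; rewrite eqxx !inE => /andP [/orP [/eqP au|Hua'] /orP [/eqP aw|Hwa]].
  - by rewrite -au aw eqxx in uw.
  - by rewrite -au sym1 Hwa in nuw.
  - by rewrite -aw Hua' in nuw.
  - by rewrite sym1.
case: (HX (u, h) (w, h)) => p [[/andP [Hp /eqP Hl] Hmin] Hint].
have Hs : size p <= 2.
  apply: (Hmin [:: (a, h); (w, h)]).
  by rewrite /is_walk /= /box_rel /= Hua Haw !eqxx !orbT.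
case: p Hp Hl Hmin Hint Hs => [|z [|z' [|]]] //=.
- by move=> _ [] /eqP; rewrite (negbTE uw).
- move=> /andP [H _] Hz _ _ _; subst z.
  by move: H; rewrite /box_rel /= (negbTE uw) (negbTE nuw).
- move=> /and3P [H1 H2 _] Hz' _; subst z'; rewrite andbT => Hz _.
  case: z H1 H2 Hz => b c; rewrite /box_rel /=.
  case/orP => /andP [H1 H2]; case/orP => /andP [H3 H4].
  + by rewrite (eqP H1) (eqP H3) eqxx in uw.
  + by rewrite (eqP H1) H3 in nuw.
  + by rewrite -(eqP H3) H1 in nuw.
  + have /eqP ba : b == a by rewrite -inter !inE H1 sym1 H3 !orbT.
    by rewrite ba -(eqP H2).
Qed.
End PBound.

Lemma mu_ge (T : finType) (e : rel T) (X : {set T}) :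
  total_mv_set e X -> #|X| <= mu_t e.
Proof.
move=> H; rewrite /mu_t; apply: (leq_bigmax_cond (F := fun X : {set T} => #|X|)).
by rewrite /total_mv_setb; case: excluded_middle_informative.
Qed.

Lemma mu_le (T : finType) (e : rel T) m :
  (forall X : {set T}, total_mv_set e X -> #|X| <= m) -> mu_t e <= m.
Proof.
move=> H; rewrite /mu_t; apply/bigmax_leqP => X.
by rewrite /total_mv_setb; case: excluded_middle_informative => // HX _; apply: H.
Qed.

Lemma bound1 (T1 T2 : finType) (e1 : rel T1) (e2 : rel T2) X :
  simple_graph e1 -> total_mv_set (box_rel e1 e2) X ->
  #|X| <= (#|T1| - #|Pset e1|) * mu_t e2.
Proof.
move=> [sym1 irr1] HX.
have card : #|X| = \sum_(a : T1) #|[set h | (a, h) \in X]|.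
  rewrite -sum1_card big_mkcond /=.
  rewrite (eq_bigr (fun a => \sum_(h : T2) (if (a, h) \in X then 1 else 0))).
    by rewrite pair_bigA /=; apply: eq_bigr => [[a h]].
  by move=> a _; rewrite -sum1_card big_mkcond /=; apply: eq_bigr => h _; rewrite inE.
rewrite card (bigID (mem (Pset e1))) /= big1 ?add0n; last first.
  move=> a Ha; apply/eqP; rewrite cards_eq0; apply/eqP/setP => h.
  by rewrite !inE; apply/negbTE/P_notin.
apply: (@leq_trans (\sum_(a | a \notin Pset e1) mu_t e2)).
  by apply: leq_sum => a _; apply/mu_ge/fiber_mv.
rewrite (eq_bigl (mem (~: Pset e1))) => [|a]; last by rewrite !inE.
by rewrite sum_nat_const cardsCs setCK.
Qed.

Lemma swap_box (T1 T2 : finType) (e1 : rel T1) (e2 : rel T2) x y :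
  box_rel e2 e1 (x.2, x.1) (y.2, y.1) = box_rel e1 e2 x y.
Proof. by rewrite /box_rel /= orbC andbC [in X in _ || X]andbC. Qed.

Theorem theorem5p3 (T1 T2 : finType) (e1 : rel T1) (e2 : rel T2) :
  simple_graph e1 -> simple_graph e2 ->
  connected_graph e1 -> connected_graph e2 ->
  mu_t (box_rel e1 e2) <=
  minn ((#|T1| - #|Pset e1|) * mu_t e2) ((#|T2| - #|Pset e2|) * mu_t e1).
Proof.
move=> s1 s2 _ _; rewrite leq_min; apply/andP; split; apply: mu_le => X HX.
  exact: bound1.
have HX' := iso_mv (f := fun x : T1 * T2 => (x.2, x.1)) (g := fun x : T2 * T1 => (x.2, x.1))
  (e' := box_rel e2 e1) (fun x => esym (surjective_pairing x))
  (fun x => esym (surjective_pairing x)) (@swap_box _ _ e1 e2) HX.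
rewrite -(card_imset _ (f := fun x : T1 * T2 => (x.2, x.1))); last by move=> [? ?] [? ?] [-> ->].
exact: bound1 s2 HX'.
Qed.
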